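(* Let $P$ satisfy (S1)–(S4). Let $h_1,h_2,h_3\in P\setminus\{1\}$ and let $\bar h=(h_1)_1(h_2)_2(h_3)_3\in H$ be the element with $h_j$ at coordinate $j$ ($j=1,2,3$) and $1$ elsewhere. Then $\bar h$ is a $[\pm,t]$-commutator if and only if $\Xi(h_1,h_2,h_3)$ holds in $P$.
   Context: Conditions (S1)–(S4) on a finite group $P$: (S1) for all $a_1,a_2\in P$ there are $x,y$ with $a_2=x^{-1}a_1^{-1}yxy^{-1}$; (S2) for all $a_1,a_2,a_3$ there are $u,v$ with $a_2=a_3ua_1^{-1}a_3^{-1}vu^{-1}v^{-1}$; (S3) for all $u_1,u_2,u_3,u_4\ne1$ there are $x,y,z$ with $u_4=x^{-1}u_1xy^{-1}u_2yz^{-1}u_3z$; (S4) there are $u_1,u_2,u_3\ne1$ with $\Xi(u_1,u_2,u_3)$ false. Here $\Xi(u_1,u_2,u_3)$ means: $\exists x,y\in P\ (u_3=x^{-1}u_2^{-1}xy^{-1}u_1^{-1}y)$. $H=\bigoplus_{i\in\mathbb Z}H_i$, each $H_i$ a copy of $P$, elements finitely supported sequences $(h_i)_{i\in\mathbb Z}$; $(h)_j$ denotes the element with $h$ at coordinate $j$ and $1$ elsewhere. $\alpha((h_i)_i)=(h_{i+1})_i$. $\bar h\in H$ is a $[\pm,t]$-commutator if $\bar h=\bar g_1\alpha(\bar g_1^{-1})\alpha(\bar g_2)\bar g_2^{-1}$ or $\bar h=\alpha(\bar g_1)\bar g_1^{-1}\bar g_2\alpha(\bar g_2^{-1})$ for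 some $\bar g_1,\bar g_2\in H$. *)

(* Defs.v *)
(* P is modelled as a finGroupType gT (P = the whole type). *)
From mathcomp Require Import all_boot all_algebra all_fingroup.
Set Implicit Arguments. Unset Strict Implicit. Unset Printing Implicit Defensive.
Import GRing.Theory.

Local Open Scope group_scope.

Section Defs.
Variable gT : finGroupType.

Definition Xi (u1 u2 u3 : gT) : Prop :=
  exists x y : gT, u3 = x^-1 * u2^-1 * x * y^-1 * u1^-1 * y.

Definition S1 : Prop :=
  forall a1 a2 : gT, exists x y : gT, a2 = x^-1 * a1^-1 * y * x * y^-1.

Definition S2 : Prop :=
  forall a1 a2 a3 : gT, exists u v : gT,
    a2 = a3 * u * a1^-1 * a3^-1 * v * u^-1 * v^-1.

Definition S3 : Prop :=
  forall u1 u2 u3 u4 : gT, u1 != 1 -> u2 != 1 -> u3 != 1 -> u4 != 1 ->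
    exists x y z : gT, u4 = x^-1 * u1 * x * y^-1 * u2 * y * z^-1 * u3 * z.

Definition S4 : Prop :=
  exists u1 u2 u3 : gT, [/\ u1 != 1, u2 != 1, u3 != 1 & ~ Xi u1 u2 u3].

(* H = direct sum over Z of copies of P: finitely supported maps int -> gT *)
Definition fin_supp (g : int -> gT) : Prop :=
  exists N : nat, forall i : int, (N < absz i)%N -> g i = 1.

Definition Hmul (g1 g2 : int -> gT) : int -> gT := fun i => g1 i * g2 i.
Definition Hinv (g : int -> gT) : int -> gT := fun i => (g i)^-1.
Definition alpha (g : int -> gT) : int -> gT := fun i => g (i + 1)%R.

Definition pm_t_commutator (h : int -> gT) : Prop :=
  exists g1 g2 : int -> gT, fin_supp g1 /\ fin_supp g2 /\
   ((forall i, h i = Hmul (Hmul (Hmul g1 (alpha (Hinv g1))) (alpha g2)) (Hinv g2) i)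
    \/
    (forall i, h i = Hmul (Hmul (Hmul (alpha g1) (Hinv g1)) g2) (alpha (Hinv g2)) i)).

Definition hbar3 (h1 h2 h3 : gT) : int -> gT :=
  fun i => if i == 1%R then h1 else if i == 2%R then h2
           else if i == 3%R then h3 else 1.
End Defs.

(* Main.v *)
Require Import Defs.
From mathcomp Require Import all_boot all_algebra all_fingroup.
From mathcomp Require Import zify.
Local Open Scope group_scope.

Ltac gnorm := repeat (rewrite ?invgM ?invgK ?invg1 ?mulgA ?mulgV ?mulVg
   ?mulg1 ?mul1g ?mulgK ?mulgVK).

Lemma conj1 (gT : finGroupType) (a z : gT) : a * z * a^-1 = 1 -> z = 1.
Proof.
move=> H. have : a^-1 * (a * z * a^-1) * a = a^-1 * 1 * a by rewrite H.
by gnorm.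
Qed.

Lemma conj1' (gT : finGroupType) (u v : gT) : u * v^-1 = 1 -> u = v.
Proof. move=> H. have : u * v^-1 * v = 1 * v by rewrite H. by gnorm. Qed.

Lemma const_d (gT : finGroupType) (d : int -> gT) :
  (forall i : int, i != 1%R -> i != 2%R -> i != 3%R -> d (i + 1)%R = d i) ->
  fin_supp d -> d 1%R = 1 /\ d 4%R = 1.
Proof.
move=> Hd [N HN]; split.
- have E : forall n : nat, d (1 - n%:Z)%R = d 1%R.
    elim=> [|n IH]; first by rewrite GRing.subr0.
    rewrite -IH. have -> : (1 - n%:Z = (1 - n.+1%:Z) + 1 :> int)%R by lia.
    rewrite Hd //; apply/eqP; lia.
  rewrite -(E N.+2) HN //; lia.
- have E : forall n : nat, d (4 + n%:Z)%R = d 4%R.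
    elim=> [|n IH]; first by rewrite GRing.addr0.
    rewrite -IH. have -> : (4 + n.+1%:Z = (4 + n%:Z) + 1 :> int)%R by lia.
    rewrite Hd //; apply/eqP; lia.
  rewrite -(E N) HN //; lia.
Qed.

Lemma fin_supp_mul (gT : finGroupType) (a b : int -> gT) :
  fin_supp a -> fin_supp b -> fin_supp (fun i => (a i)^-1 * b i).
Proof.
move=> [N1 H1] [N2 H2]; exists (N1 + N2)%N => i Hi.
rewrite H1 ?H2 ?invg1 ?mulg1 //; lia.
Qed.

Lemma hbar_out (gT : finGroupType) (h1 h2 h3 : gT) (i : int) :
  i != 1%R -> i != 2%R -> i != 3%R -> hbar3 h1 h2 h3 i = 1.
Proof. by rewrite /hbar3 => /negbTE -> /negbTE -> /negbTE ->. Qed.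

Lemma form1_Xi (gT : finGroupType) (h1 h2 h3 : gT) (a d : int -> gT) :
  fin_supp d ->
  (forall i, hbar3 h1 h2 h3 i = a i * d (i + 1)%R * (d i)^-1 * (a i)^-1) ->
  Xi h1 h2 h3.
Proof.
move=> Fd H.
have [d1 d4] : d 1%R = 1 /\ d 4%R = 1.
  apply: const_d Fd => i n1 n2 n3; apply: conj1'; apply: (@conj1 _ (a i)).
  by rewrite mulgA -H hbar_out.
have e1 := H 1%R; have e2 := H 2%R; have e3 := H 3%R.
rewrite /hbar3 /= in e1 e2 e3. rewrite d1 in e1. rewrite d4 in e3.
exists (a 2%R * d 2%R * (a 3%R)^-1), (a 1%R * (a 3%R)^-1).
rewrite e1 e2 e3. by gnorm.
Qed.

Lemma form2_Xi (gT : finGroupType) (h1 h2 h3 : gT) (a d : int -> gT) :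
  fin_supp d ->
  (forall i, hbar3 h1 h2 h3 i =
     a (i + 1)%R * d i * (d (i + 1)%R)^-1 * (a (i + 1)%R)^-1) ->
  Xi h1 h2 h3.
Proof.
move=> Fd H.
have [d1 d4] : d 1%R = 1 /\ d 4%R = 1.
  apply: const_d Fd => i n1 n2 n3; symmetry; apply: conj1';
  apply: (@conj1 _ (a (i + 1)%R)).
  by rewrite mulgA -H hbar_out.
have e1 := H 1%R; have e2 := H 2%R; have e3 := H 3%R.
rewrite /hbar3 /= in e1 e2 e3. rewrite d1 in e1. rewrite d4 in e3.
exists (a 3%R * (a 4%R)^-1), (a 2%R * (a 4%R)^-1).
rewrite e1 e2 e3. by gnorm.
Qed.

Theorem lemma4p5 (gT : finGroupType) :
  S1 gT -> S2 gT -> S3 gT -> S4 gT ->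
  forall h1 h2 h3 : gT, h1 != 1 -> h2 != 1 -> h3 != 1 ->
  (pm_t_commutator (hbar3 h1 h2 h3) <-> Xi h1 h2 h3).
Proof.
move=> _ _ _ _ h1 h2 h3 _ _ _; split.
- move=> [a [b [Fa [Fb [H|H]]]]].
  + apply: (@form1_Xi _ _ _ _ a (fun i => (a i)^-1 * b i)).
      exact: fin_supp_mul.
    move=> i; rewrite H /Hmul /Hinv /alpha. by gnorm.
  + apply: (@form2_Xi _ _ _ _ a (fun i => (a i)^-1 * b i)).
      exact: fin_supp_mul.
    move=> i; rewrite H /Hmul /Hinv /alpha. by gnorm.
- move=> [x [y Ex]].
  pose a := fun i : int => if i == 2%R then y else if i == 3%R then x else 1.
  pose e := fun i : int => if i == 2%R then y^-1 * h1^-1 * y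
                           else if i == 3%R then h3 else 1.
  exists a, (fun i => a i * e i); split; [|split].
  + exists 3%N => i Hi; rewrite /a; case: eqP => [E|_]; first lia.
    case: eqP => [E|_] //; lia.
  + exists 3%N => i Hi; rewrite /a /e; case: eqP => [E|_]; first lia.
    case: eqP => [E|_]; [lia | by gnorm].
  + right => i; rewrite /Hmul /Hinv /alpha /a /e /hbar3.
    have -> : ((i + 1)%R == 2%R) = (i == 1%R) by apply/eqP/eqP; lia.
    have -> : ((i + 1)%R == 3%R) = (i == 2%R) by apply/eqP/eqP; lia.
    case: (boolP (i == 1%R)) => [/eqP E1|n1]; rewrite ?E1 /=; first by gnorm.
    case: (boolP (i == 2%R)) => [/eqP E2|n2]; rewrite ?E2 /=; first by rewrite Ex; gnorm.
    case: (boolP (i == 3%R)) => [/eqP E3|n3]; rewrite ?E3 /=; first by gnorm.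
    by gnorm.
Qed.
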